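(* Let $k \geq 3$ be an integer and let $A_k$ be a set of positive integers that contains no $k$-term geometric progression. Then \[ d_U(A_k) \leq 1 - \frac{1}{2^k -1} - \frac{2}{5}\left( \frac{1}{5^{k-1} } - \frac{1}{6^{k-1}} \right) - \frac{4}{15}\left( \frac{1}{7^{k-1} } - \frac{1}{10^{k-1}} \right). \]
   Context: A geometric progression of length $k$ with common ratio $r$, where $r \neq 0, \pm 1$ is a real number, is a sequence $(a_0, a_1, \ldots, a_{k-1})$ of nonzero real numbers with $a_i/a_{i-1} = r$ for $i = 1, \ldots, k-1$. A $k$-term geometric progression is a geometric progression of length $k$ with some common ratio $r$. A set contains no $k$-term geometric progression if it does not contain numbers $a_0, \ldots, a_{k-1}$ such that $(a_0, \ldots, a_{k-1})$ is a $k$-term geometric progression. For a set $A$ of positive integers, $A(n)$ denotes the number of $a \in A$ with $a \leq n$, and the upper asymptotic density is $d_U(A) = \limsup_{n \to \infty} A(n)/n$. *)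

(* Defs.v *)
From Stdlib Require Import Reals Lra Lia List.
From Coquelicot Require Import Coquelicot.
Open Scope R_scope.

(* A set of positive integers is represented by a boolean predicate on nat
   (membership), together with the hypothesis that all members are >= 1. *)

Definition counting (A : nat -> bool) (n : nat) : nat :=
  List.length (List.filter A (List.seq 1 n)).

Definition upper_density (A : nat -> bool) : Rbar :=
  LimSup_seq (fun n => INR (counting A n) / INR n).

Definition contains_geom_prog (A : nat -> bool) (k : nat) : Prop :=
  exists (a0 r : R),
    a0 <> 0 /\ r <> 0 /\ r <> 1 /\ r <> -1 /\
    forall i : nat, (i < k)%nat ->
      exists m : nat, A m = true /\ INR m = a0 * r ^ i.

(* Main.v *)
Require Import Defs.
From Stdlib Require Import Reals Lra Lia List Arith.
From Coquelicot Require Import Coquelicot.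
Import ListNotations.
Open Scope nat_scope.

Lemma dvd_pow_coprime p q x d: Nat.gcd p q = 1 -> Nat.divide p (x * q^d) -> Nat.divide p x.
Proof.
  intros Hg. induction d; intros H.
  - simpl in H. rewrite Nat.mul_1_r in H. exact H.
  - apply IHd. apply (Nat.gauss p q). 2: exact Hg.
    simpl in H. replace (q * (x * q^d)) with (x * (q * q^d)) by ring. exact H.
Qed.

Lemma odd_decomp x y s s': 2^x*(2*s+1) = 2^y*(2*s'+1) -> x=y /\ s=s'.
Proof.
  revert y. induction x; intros y H.
  - destruct y. simpl in H. split; lia.
    exfalso. simpl in H. lia.
  - destruct y. exfalso. simpl in H. lia.
    simpl in H. assert (2 ^ x * (2 * s + 1) = 2 ^ y * (2 * s' + 1)) by lia.
    destruct (IHx y H0). split; lia.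
Qed.

Lemma cancel_pow p q a a' d : Nat.gcd p q = 1 -> (0 < d) -> q^d*a = p^d*a' ->
  Nat.divide p a /\ Nat.divide q a'.
Proof.
  intros Hg Hd H. split.
  - apply (dvd_pow_coprime p q a d Hg). exists (p^(d-1) * a').
    rewrite Nat.mul_comm, H. replace d with (S (d-1)) at 1 by lia. simpl. ring.
  - apply (dvd_pow_coprime q p a' d). rewrite Nat.gcd_comm; exact Hg. exists (q^(d-1) * a).
    rewrite Nat.mul_comm, <- H. replace d with (S (d-1)) at 1 by lia. simpl. ring.
Qed.

Lemma fam_inj_le q p a a' j j' k: Nat.gcd p q = 1 -> 1 <= q -> 1 <= p -> j <= j' -> j' < k ->
  a * q^(k-1-j) * p^j = a' * q^(k-1-j') * p^j' ->
  a = a' \/ (Nat.divide p a /\ Nat.divide q a').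
Proof.
  intros Hg Hq Hp Hjj Hj' H.
  destruct (Nat.eq_dec j j') as [E|E].
  - subst. left. assert (0 < q^(k-1-j') * p^j').
    { apply Nat.mul_pos_pos; apply Nat.neq_0_lt_0, Nat.pow_nonzero; lia. }
    nia.
  - right. apply (cancel_pow p q a a' (j'-j) Hg). lia.
    assert (Hp': p^j' = p^j * p^(j'-j)) by (rewrite <- Nat.pow_add_r; f_equal; lia).
    assert (Hq': q^(k-1-j) = q^(k-1-j') * q^(j'-j)) by (rewrite <- Nat.pow_add_r; f_equal; lia).
    rewrite Hp', Hq' in H.
    set (X := q^(k-1-j')) in *. set (Y := p^j) in *.
    assert (0 < X * Y). { apply Nat.mul_pos_pos; apply Nat.neq_0_lt_0, Nat.pow_nonzero; lia. }
    apply (Nat.mul_cancel_l _ _ (X*Y)). lia.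
    replace (X * Y * (q ^ (j' - j) * a)) with (a * (X * q ^ (j' - j)) * Y) by ring.
    rewrite H. ring.
Qed.

Lemma fam_inj q p a a' j j' k: Nat.gcd p q = 1 -> 1 <= q -> 1 <= p -> j < k -> j' < k ->
  ((~ Nat.divide p a /\ ~ Nat.divide p a') \/ (~ Nat.divide q a /\ ~ Nat.divide q a')) ->
  a * q^(k-1-j) * p^j = a' * q^(k-1-j') * p^j' -> a = a'.
Proof.
  intros Hg Hq Hp Hj Hj' Hnd H.
  destruct (Nat.le_ge_cases j j').
  - destruct (fam_inj_le q p a a' j j' k Hg Hq Hp H0 Hj' H) as [|[]]; auto. tauto.
  - symmetry in H. destruct (fam_inj_le q p a' a j' j k Hg Hq Hp H0 Hj H) as [|[]]; auto. tauto.
Qed.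

Definition term (k:nat) (g: nat*nat*nat) (j:nat) : nat :=
  let '(c,q,p) := g in (c * q^(k-1-j) * p^j)%nat.

Definition isB k T N (g : nat*nat*nat) := exists t s, t < T /\ g = (2^(t*k)*(2*s+1), 1, 2) /\
   2^(t*k)*(2*s+1)*2^(k-1) <= N.
Definition isF1 k N (g : nat*nat*nat) := exists a, g = (a,3,5) /\ ~ Nat.divide 2 a /\ ~ Nat.divide 5 a
   /\ N < a*6^(k-1) /\ a*5^(k-1) <= N.
Definition isF2 k N (g : nat*nat*nat) := exists a, g = (a,5,7) /\ ~ Nat.divide 2 a /\ ~ Nat.divide 3 a
   /\ ~ Nat.divide 5 a /\ N < a*10^(k-1) /\ a*7^(k-1) <= N.

Lemma ndvd_prod r a q p e f: ~ Nat.divide r a -> Nat.gcd r q = 1 -> Nat.gcd r p = 1 ->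
  ~ Nat.divide r (a*q^e*p^f).
Proof.
  intros H1 H2 H3 H. apply H1. apply (dvd_pow_coprime r q a e H2).
  apply (dvd_pow_coprime r p _ f H3). exact H.
Qed.

Lemma term_block k t s j : term k (2^(t*k)*(2*s+1), 1, 2) j = 2^(t*k+j)*(2*s+1).
Proof. simpl. rewrite Nat.pow_1_l, Nat.pow_add_r. ring. Qed.

Lemma term_lo k c q p j : q <= p -> j < k -> c * q^(k-1) <= term k (c,q,p) j.
Proof.
  intros Hqp Hj. simpl.
  assert (q^(k-1) = q^(k-1-j) * q^j) by (rewrite <- Nat.pow_add_r; f_equal; lia).
  rewrite H. assert (q^j <= p^j) by (apply Nat.pow_le_mono_l; lia).
  rewrite Nat.mul_assoc. apply Nat.mul_le_mono_l. exact H0.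
Qed.

Lemma term_hi k c q p j : q <= p -> j < k -> term k (c,q,p) j <= c * p^(k-1).
Proof.
  intros Hqp Hj. simpl.
  assert (p^(k-1) = p^(k-1-j) * p^j) by (rewrite <- Nat.pow_add_r; f_equal; lia).
  rewrite H. assert (q^(k-1-j) <= p^(k-1-j)) by (apply Nat.pow_le_mono_l; lia).
  rewrite Nat.mul_assoc. rewrite <- Nat.mul_assoc, <- (Nat.mul_assoc c). apply Nat.mul_le_mono_l.
  apply Nat.mul_le_mono_r. exact H0.
Qed.

Lemma odd_not_even_term k t s j a q p e f:
  ~ Nat.divide 2 a -> Nat.gcd 2 q = 1 -> Nat.gcd 2 p = 1 ->
  0 < t*k + j -> 2^(t*k+j)*(2*s+1) <> a*q^e*p^f.
Proof.
  intros Ha Hq Hp Hpos E. apply (ndvd_prod 2 a q p e f Ha Hq Hp). rewrite <- E.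
  exists (2^(t*k+j-1)*(2*s+1)). replace (t*k+j) with (S (t*k+j-1)) at 1 by lia. simpl. ring.
Qed.

Lemma pow_pos' b n : 1 <= b -> 0 < b^n.
Proof. intros. apply Nat.neq_0_lt_0, Nat.pow_nonzero. lia. Qed.

Lemma BB k T N g g' j j' : j < k -> j' < k -> isB k T N g -> isB k T N g' ->
  term k g j = term k g' j' -> g = g'.
Proof.
  intros Hj Hj' [t [s [Ht [-> Hb]]]] [t' [s' [Ht' [-> Hb']]]]. rewrite !term_block.
  intros E. apply odd_decomp in E. destruct E as [E1 E2]. subst s'.
  assert (t = t') by nia. subst. reflexivity.
Qed.

Lemma BF k T N g g' j j' : j < k -> j' < k -> isB k T N g -> (isF1 k N g' \/ isF2 k N g') ->
  term k g j <> term k g' j'.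
Proof.
  intros Hj Hj' [t [s [Ht [-> Hb]]]] HF. rewrite term_block.
  assert (Hodd: exists a q p, g' = (a,q,p) /\ ~ Nat.divide 2 a /\ Nat.gcd 2 q = 1 /\ Nat.gcd 2 p = 1
     /\ q <= p /\ N < a * q^(k-1) * 2^(k-1)).
  { destruct HF as [[a [-> [H2 [H5 [Hl Hh]]]]] | [a [-> [H2 [H3 [H5 [Hl Hh]]]]]]].
    - exists a, 3, 5. repeat split; auto. rewrite <- Nat.mul_assoc, <- Nat.pow_mul_l. exact Hl.
    - exists a, 5, 7. repeat split; auto. rewrite <- Nat.mul_assoc, <- Nat.pow_mul_l. exact Hl. }
  destruct Hodd as [a [q [p [-> [Ha [Hq [Hp [Hqp Hl]]]]]]]].
  destruct (Nat.eq_dec (t*k+j) 0) as [Z|Z].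
  - intros E. pose proof (term_lo k a q p j' Hqp Hj'). rewrite <- E in H.
    rewrite Z in H. simpl in H.
    assert (t*k = 0) by lia. rewrite H0 in Hb. simpl in Hb.
    assert (a * q ^ (k - 1) * 2^(k-1) <= (2*s+1) * 2^(k-1)) by (apply Nat.mul_le_mono_r; lia). lia.
  - simpl. apply odd_not_even_term; auto. lia.
Qed.

Lemma F1F2 k N g g' j j' : 3 <= k -> j < k -> j' < k -> isF1 k N g -> isF2 k N g' ->
  term k g j <> term k g' j'.
Proof.
  intros Hk Hj Hj' [a [-> [H2 [H5 [Hl Hh]]]]] [b [-> [H2' [H3' [H5' [Hl' Hh']]]]]]. simpl. intros E.
  destruct (Nat.eq_dec (k-1-j) 0) as [Z|Z].
  - rewrite Z in E. replace j with (k-1) in E by lia. simpl in E. rewrite Nat.mul_1_r in E.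
    destruct (Nat.eq_dec j' 0) as [Z'|Z'].
    + subst j'. rewrite Nat.sub_0_r in E. simpl in E. rewrite Nat.mul_1_r in E.
      apply Nat.mul_cancel_r in E. 2: apply Nat.pow_nonzero; lia. subst b.
      assert (6^(k-1) <= 7^(k-1)) by (apply Nat.pow_le_mono_l; lia). nia.
    + assert (P5: 5^(k-1) = 5^(k-1-j') * 5^j') by (rewrite <- Nat.pow_add_r; f_equal; lia).
      rewrite P5 in E.
      assert (5 ^ j' * a = 7 ^ j' * b).
      { apply (Nat.mul_cancel_l _ _ (5^(k-1-j'))). apply Nat.pow_nonzero; lia.
        replace (5 ^ (k - 1 - j') * (5 ^ j' * a)) with (a * (5 ^ (k - 1 - j') * 5 ^ j')) by ring.
        rewrite E. ring. }
      apply cancel_pow in H. destruct H. tauto. reflexivity. lia.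
  - apply (ndvd_prod 3 b 5 7 (k-1-j') j' H3'); try reflexivity. rewrite <- E.
    exists (a * 3^(k-1-j-1) * 5^j). replace (k-1-j) with (S (k-1-j-1)) at 1 by lia. simpl. ring.
Qed.

Lemma master k T N g g' j j' : 3 <= k -> j < k -> j' < k ->
  (isB k T N g \/ isF1 k N g \/ isF2 k N g) ->
  (isB k T N g' \/ isF1 k N g' \/ isF2 k N g') ->
  term k g j = term k g' j' -> g = g'.
Proof.
  intros Hk Hj Hj' HG HG' E.
  destruct HG as [HB|[H1|H2]]; destruct HG' as [HB'|[H1'|H2']].
  - exact (BB k T N g g' j j' Hj Hj' HB HB' E).
  - exfalso. exact (BF k T N g g' j j' Hj Hj' HB (or_introl H1') E).
  - exfalso. exact (BF k T N g g' j j' Hj Hj' HB (or_intror H2') E).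
  - exfalso. exact (BF k T N g' g j' j Hj' Hj HB' (or_introl H1) (eq_sym E)).
  - destruct H1 as [a [-> [H2 [H5 _]]]]. destruct H1' as [a' [-> [H2' [H5' _]]]].
    simpl in E. f_equal. f_equal. eapply (fam_inj 3 5 a a' j j' k); eauto; try lia; try reflexivity.
  - exfalso. exact (F1F2 k N g g' j j' Hk Hj Hj' H1 H2' E).
  - exfalso. exact (BF k T N g' g j' j Hj' Hj HB' (or_intror H2) (eq_sym E)).
  - exfalso. exact (F1F2 k N g' g j' j Hk Hj' Hj H1' H2 (eq_sym E)).
  - destruct H2 as [a [-> [H2 [H3 [H5 _]]]]]. destruct H2' as [a' [-> [H2' [H3' [H5' _]]]]].
    simpl in E. f_equal. f_equal. eapply (fam_inj 5 7 a a' j j' k); eauto; try lia; try reflexivity.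
Qed.

Lemma NoDup_map_inj {X Y} (f: X->Y) l: NoDup l -> (forall x y, In x l -> In y l -> f x = f y -> x = y) -> NoDup (map f l).
Proof.
  induction l; intros Hn Hi; simpl; constructor.
  - inversion Hn; subst. intros Hin. apply in_map_iff in Hin. destruct Hin as [y [E Hy]].
    assert (y = a) by (apply Hi; simpl; auto). subst. contradiction.
  - inversion Hn; subst. apply IHl; auto. intros; apply Hi; simpl; auto.
Qed.

Lemma NoDup_flat_map_disj {X Y} (f: X -> list Y) l : NoDup l -> (forall x, In x l -> NoDup (f x)) ->
  (forall x y z, In x l -> In y l -> In z (f x) -> In z (f y) -> x = y) -> NoDup (flat_map f l).
Proof.
  induction l; intros Hn Hf Hd; simpl. constructor.
  inversion Hn; subst. apply NoDup_app.
  - apply Hf; simpl; auto.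
  - apply IHl; auto. intros; apply Hf; simpl; auto. intros; eapply Hd; simpl; eauto.
  - intros z Hz Hz'. apply in_flat_map in Hz'. destruct Hz' as [y [Hy Hzy]].
    assert (a = y) by (eapply Hd; simpl; eauto). subst. contradiction.
Qed.

Definition blocks k T N : list (nat*nat*nat) :=
  flat_map (fun t => map (fun s => (2^(t*k)*(2*s+1), 1, 2)) (seq 0 (N / 2^(t*k+k)))) (seq 0 T).

Definition famL m (rs: list nat) q p D E N : list (nat*nat*nat) :=
  flat_map (fun r => map (fun s => (m*s+r, q, p)) (seq (N/(m*D)+1) (N/(m*E) - (N/(m*D)+1)))) rs.

Definition fam1 k N := famL 10 [1;3;7;9]%nat 3 5 (6^(k-1)) (5^(k-1)) N.
Definition fam2 k N := famL 30 [1;7;11;13;17;19;23;29]%nat 5 7 (10^(k-1)) (7^(k-1)) N.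

Lemma fam_bounds m r s D E N: 0<m -> r<m -> 0<D -> 0<E -> N/(m*D)+1 <= s -> s < N/(m*E) ->
  N < (m*s+r)*D /\ (m*s+r)*E <= N.
Proof.
  intros Hm Hr HD HE H1 H2. split.
  - pose proof (Nat.div_mod N (m*D)). pose proof (Nat.mod_upper_bound N (m*D)).
    assert (m*D*(N/(m*D)+1) <= m*D*s) by (apply Nat.mul_le_mono_l; lia). nia.
  - pose proof (Nat.Div0.mul_div_le N (m*E)).
    assert (m*E*(s+1) <= m*E*(N/(m*E))) by (apply Nat.mul_le_mono_l; lia). nia.
Qed.

Lemma in_blocks k T N g : 1 <= k -> In g (blocks k T N) -> isB k T N g.
Proof.
  intros Hk H. unfold blocks in H. apply in_flat_map in H. destruct H as [t [Ht H]].
  apply in_map_iff in H. destruct H as [s [<- Hs]]. apply in_seq in Ht, Hs.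
  exists t, s. repeat split; try lia.
  pose proof (Nat.Div0.mul_div_le N (2^(t*k+k))).
  assert (2^(t*k+k) = 2^(t*k) * 2^(k-1) * 2).
  { rewrite <- !Nat.pow_add_r. rewrite <- (Nat.pow_1_r 2) at 3. rewrite <- Nat.pow_add_r. f_equal. lia. }
  rewrite H0 in H.
  assert (2^(t*k) * 2^(k-1) * 2 * (s+1) <= 2^(t*k) * 2^(k-1) * 2 * (N / 2 ^ (t * k + k))) by (apply Nat.mul_le_mono_l; lia).
  rewrite H0 in H1. set (Q := N / _) in *. set (a := 2^(t*k)) in *. set (b := 2^(k-1)) in *. nia.
Qed.

Lemma in_fam1 k N g : In g (fam1 k N) -> isF1 k N g.
Proof.
  intros H. unfold fam1, famL in H. apply in_flat_map in H. destruct H as [r [Hr H]].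
  apply in_map_iff in H. destruct H as [s [<- Hs]]. apply in_seq in Hs.
  assert (Hr': r < 10 /\ (r = 1 \/ r = 3 \/ r = 7 \/ r = 9)) by (simpl in Hr; lia).
  destruct (fam_bounds 10 r s (6^(k-1)) (5^(k-1)) N) as [B1 B2]; try lia; try apply pow_pos'; try lia.
  exists (10*s+r). repeat split; auto; intros [z Hz]; lia.
Qed.

Lemma in_fam2 k N g : In g (fam2 k N) -> isF2 k N g.
Proof.
  intros H. unfold fam2, famL in H. apply in_flat_map in H. destruct H as [r [Hr H]].
  apply in_map_iff in H. destruct H as [s [<- Hs]]. apply in_seq in Hs.
  assert (Hr': r < 30 /\ (r = 1 \/ r = 7 \/ r = 11 \/ r = 13 \/ r = 17 \/ r = 19 \/ r = 23 \/ r = 29)) by (simpl in Hr; lia).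
  destruct (fam_bounds 30 r s (10^(k-1)) (7^(k-1)) N) as [B1 B2]; try lia; try apply pow_pos'; try lia.
  exists (30*s+r). repeat split; auto; intros [z Hz]; lia.
Qed.

Lemma divmod_uniq m s s' x y : x < m -> y < m -> m*s+x = m*s'+y -> x = y.
Proof.
  intros Hx Hy E. destruct (lt_eq_lt_dec s s') as [[L|L]|L].
  - assert (m*(s+1) <= m*s') by (apply Nat.mul_le_mono_l; lia). lia.
  - subst. lia.
  - assert (m*(s'+1) <= m*s) by (apply Nat.mul_le_mono_l; lia). lia.
Qed.

Lemma famL_NoDup m rs q p D E N : 0 < m -> NoDup rs -> (forall r, In r rs -> r < m) -> NoDup (famL m rs q p D E N).
Proof.
  intros Hm Hn Hr. unfold famL. apply NoDup_flat_map_disj; auto.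
  - intros r _. apply NoDup_map_inj. apply seq_NoDup. intros x y _ _ E'. injection E' as E''.
    apply (Nat.mul_cancel_l _ _ m). lia. lia.
  - intros x y z Hx Hy Hzx Hzy. apply in_map_iff in Hzx, Hzy.
    destruct Hzx as [s [<- _]]. destruct Hzy as [s' [E' _]]. injection E'. intros.
    pose proof (Hr x Hx). pose proof (Hr y Hy). symmetry. eapply divmod_uniq; eauto.
Qed.

Lemma famL_length m rs q p D E N : length (famL m rs q p D E N) = length rs * (N/(m*E) - (N/(m*D)+1)).
Proof.
  unfold famL. induction rs; simpl; auto. rewrite length_app, length_map, length_seq, IHrs. ring.
Qed.

Lemma blocks_NoDup k T N : 1 <= k -> NoDup (blocks k T N).
Proof.
  intros Hk. unfold blocks. apply NoDup_flat_map_disj. apply seq_NoDup.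
  - intros t _. apply NoDup_map_inj. apply seq_NoDup. intros x y _ _ E'. injection E'. intros.
    pose proof (pow_pos' 2 (t*k)). nia.
  - intros x y z _ _ Hzx Hzy. apply in_map_iff in Hzx, Hzy.
    destruct Hzx as [s [<- _]]. destruct Hzy as [s' [E' _]]. injection E' as E''.
    apply odd_decomp in E''. destruct E'' as [E1 _]. symmetry. apply (Nat.mul_cancel_r _ _ k). lia. exact E1.
Qed.

Lemma blocks_length k T N : length (blocks k (S T) N) = length (blocks k T N) + N / 2^(T*k+k).
Proof.
  unfold blocks. rewrite seq_S, flat_map_app. simpl. rewrite length_app, app_nil_r, length_map, length_seq. ring.
Qed.

Definition G k T N := blocks k T N ++ fam1 k N ++ fam2 k N.

Lemma G_NoDup k T N : 1 <= k -> NoDup (G k T N).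
Proof.
  intros Hk. unfold G. apply NoDup_app. apply blocks_NoDup; auto.
  apply NoDup_app. apply famL_NoDup; [lia| |simpl;lia]. repeat constructor; simpl; lia.
  apply famL_NoDup; [lia| |simpl;lia]. repeat constructor; simpl; lia.
  - intros a H1 H2. apply in_fam1 in H1. apply in_fam2 in H2.
    destruct H1 as [x [-> _]]. destruct H2 as [y [E _]]. discriminate.
  - intros a H1 H2. apply in_blocks in H1; auto. destruct H1 as [t [s [_ [-> _]]]].
    apply in_app_or in H2. destruct H2 as [H2|H2]; [apply in_fam1 in H2|apply in_fam2 in H2];
    destruct H2 as [y [E _]]; discriminate.
Qed.

Lemma in_G k T N g : 1 <= k -> In g (G k T N) -> isB k T N g \/ isF1 k N g \/ isF2 k N g.
Proof.
  intros Hk H. unfold G in H. apply in_app_or in H. destruct H as [H|H].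
  left; apply in_blocks; auto. apply in_app_or in H. destruct H as [H|H].
  right; left; apply in_fam1; auto. right; right; apply in_fam2; auto.
Qed.

Open Scope R_scope.


Lemma count_miss (A: nat->bool) N (M: list nat): NoDup M ->
  (forall x, In x M -> (1<=x<=N)%nat /\ A x = false) -> (counting A N + length M <= N)%nat.
Proof.
  intros HM HI. unfold counting.
  assert (H: (length M <= length (filter (fun x => negb (A x)) (seq 1 N)))%nat).
  { apply NoDup_incl_length; auto. intros x Hx. destruct (HI x Hx) as [H1 H2].
    apply filter_In. split. apply in_seq. lia. rewrite H2; auto. }
  pose proof (filter_length A (seq 1 N)). rewrite length_seq in H0. lia.
Qed.


Lemma gp_has_miss k A c q p : ~contains_geom_prog A k -> (1 <= c)%nat -> (1<=q)%nat -> (q<p)%nat ->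
  exists j, (j<k)%nat /\ A (term k (c,q,p) j) = false.
Proof.
  intros HN Hc Hq Hp. apply Classical_Prop.NNPP. intros Hc2. apply HN.
  exists (INR (c*q^(k-1))), (INR p / INR q).
  assert (Hq0: INR q > 0) by (apply lt_0_INR; lia).
  assert (Hpq: INR q < INR p) by (apply lt_INR; lia).
  assert (Hc0: INR c > 0) by (apply lt_0_INR; lia).
  assert (H1: INR p / INR q > 1).
  { apply Rmult_lt_reg_r with (INR q); auto. unfold Rdiv. rewrite Rmult_assoc, Rinv_l; lra. }
  repeat split.
  - rewrite mult_INR, pow_INR. apply Rgt_not_eq. apply Rmult_lt_0_compat; auto. apply pow_lt; auto.
  - lra. - lra. - lra.
  - intros i Hi. exists (term k (c,q,p) i). split.
    + destruct (A (term k (c, q, p) i)) eqn:E; auto. exfalso. apply Hc2. exists i; split; auto.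
    + unfold term. rewrite !mult_INR, !pow_INR.
      assert (E: INR q ^ (k-1) = INR q^(k-1-i) * INR q^i) by (rewrite <- pow_add; f_equal; lia).
      rewrite E.
      unfold Rdiv. rewrite Rpow_mult_distr, pow_inv. field. apply pow_nonzero. lra.
Qed.

Definition miss k (A: nat -> bool) g : nat :=
  match find (fun j => negb (A (term k g j))) (seq 0 k) with Some j => term k g j | None => 0%nat end.

Lemma miss_spec k A g : (exists j, (j<k)%nat /\ A (term k g j) = false) ->
  exists j, (j<k)%nat /\ miss k A g = term k g j /\ A (term k g j) = false.
Proof.
  intros [j [Hj HA]]. unfold miss.
  destruct (find (fun j => negb (A (term k g j))) (seq 0 k)) eqn:E.
  - apply find_some in E. destruct E as [E1 E2]. apply in_seq in E1. exists n. repeat split; try lia.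
    destruct (A (term k g n)); auto; discriminate.
  - exfalso. eapply find_none in E. 2: apply in_seq; split; [lia| exact Hj]. rewrite HA in E. discriminate.
Qed.

Lemma G_shape k T N g : (1 <= k)%nat -> In g (G k T N) -> exists c q p, g = (c,q,p) /\ (1 <= c)%nat /\ (1 <= q)%nat
  /\ (q < p)%nat /\ (c * p^(k-1) <= N)%nat.
Proof.
  intros Hk H. destruct (in_G k T N g Hk H) as [[t [s [_ [-> Hb]]]]|[[a [-> [H2 [_ [_ Hh]]]]]|[a [-> [H2 [_ [_ [_ Hh]]]]]]]].
  - exists (2^(t*k)*(2*s+1))%nat, 1%nat, 2%nat. repeat split; try lia; auto.
    pose proof (pow_pos' 2 (t*k)). nia.
  - exists a, 3%nat, 5%nat. repeat split; try lia; auto. destruct a. exfalso; apply H2; exists 0%nat; auto. lia.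
  - exists a, 5%nat, 7%nat. repeat split; try lia; auto. destruct a. exfalso; apply H2; exists 0%nat; auto. lia.
Qed.

Lemma main_count k T N A : (3 <= k)%nat -> ~ contains_geom_prog A k ->
  (counting A N + length (G k T N) <= N)%nat.
Proof.
  intros Hk HN. rewrite <- (length_map (miss k A)). apply count_miss.
  - apply NoDup_map_inj. apply G_NoDup; lia.
    intros x y Hx Hy E.
    destruct (G_shape k T N x ltac:(lia) Hx) as [c [q [p [-> [Hc [Hq [Hp _]]]]]]].
    destruct (G_shape k T N y ltac:(lia) Hy) as [c' [q' [p' [-> [Hc' [Hq' [Hp' _]]]]]]].
    destruct (miss_spec k A (c,q,p) (gp_has_miss k A c q p HN Hc Hq Hp)) as [j [Hj [E1 _]]].
    destruct (miss_spec k A (c',q',p') (gp_has_miss k A c' q' p' HN Hc' Hq' Hp')) as [j' [Hj' [E2 _]]].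
    rewrite E1, E2 in E. apply (master k T N _ _ j j' Hk Hj Hj'); auto; apply in_G; auto; lia.
  - intros x Hx. apply in_map_iff in Hx. destruct Hx as [g [<- Hg]].
    destruct (G_shape k T N g ltac:(lia) Hg) as [c [q [p [-> [Hc [Hq [Hp Hcp]]]]]]].
    destruct (miss_spec k A (c,q,p) (gp_has_miss k A c q p HN Hc Hq Hp)) as [j [Hj [E1 HA]]].
    rewrite E1. split; auto.
    pose proof (term_lo k c q p j ltac:(lia) Hj). pose proof (term_hi k c q p j ltac:(lia) Hj).
    pose proof (pow_pos' q (k-1) Hq). split; nia.
Qed.

Lemma INR_div_lb N m : (0 < m)%nat -> INR N / INR m - 1 <= INR (N / m).
Proof.
  intros Hm. pose proof (Nat.div_mod N m ltac:(lia)). pose proof (Nat.mod_upper_bound N m ltac:(lia)).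
  assert (Hm': INR m > 0) by (apply lt_0_INR; lia).
  assert (E: INR N = INR m * INR (N/m) + INR (N mod m)).
  { rewrite H at 1. rewrite plus_INR, mult_INR. ring. }
  assert (INR (N mod m) < INR m) by (apply lt_INR; lia).
  rewrite E. apply Rle_trans with (INR (N/m) + INR (N mod m)/INR m - 1).
  right. field. lra.
  assert (INR (N mod m) / INR m < 1). { apply Rmult_lt_reg_r with (INR m); auto. unfold Rdiv. rewrite Rmult_assoc, Rinv_l; lra. }
  lra.
Qed.

Lemma INR_div_ub N m : (0 < m)%nat -> INR (N / m) <= INR N / INR m.
Proof.
  intros Hm. pose proof (Nat.Div0.mul_div_le N m).
  assert (Hm': INR m > 0) by (apply lt_0_INR; lia).
  apply le_INR in H. rewrite mult_INR in H.
  apply Rmult_le_reg_l with (INR m); auto. unfold Rdiv. rewrite (Rmult_comm (INR N)), <- Rmult_assoc, Rinv_r; lra.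
Qed.

Lemma INR_sub_lb a b : INR a - INR b <= INR (a - b).
Proof.
  destruct (Nat.le_gt_cases b a). rewrite minus_INR; auto; lra.
  replace (a - b)%nat with 0%nat by lia. simpl. apply lt_INR in H. lra.
Qed.

Lemma famL_lb m rs q p D E N : (0 < m)%nat -> (0 < D)%nat -> (0 < E)%nat ->
  INR (length rs) * (INR N / (INR m * INR E) - INR N / (INR m * INR D) - 2) <= INR (length (famL m rs q p D E N)).
Proof.
  intros Hm HD HE. rewrite famL_length, mult_INR. apply Rmult_le_compat_l. apply pos_INR.
  eapply Rle_trans. 2: apply INR_sub_lb. rewrite plus_INR.
  pose proof (INR_div_lb N (m*E) ltac:(nia)). pose proof (INR_div_ub N (m*D) ltac:(nia)).
  rewrite !mult_INR in *. simpl (INR 1). lra.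
Qed.

Fixpoint gs (k T : nat) : R := match T with O => 0 | S T' => gs k T' + / (2^k)^(S T') end.

Lemma gs_closed k T : (1 <= k)%nat -> gs k T = (1 - (/2^k)^T) / (2^k - 1).
Proof.
  intros Hk. assert (H2: 1 < 2^k) by (apply Rlt_pow_R1; lia || lra).
  induction T.
  - simpl. field. lra.
  - simpl gs. rewrite IHT. set (P := 2^k) in *. rewrite !pow_inv. simpl pow.
    assert (P^T <> 0) by (apply pow_nonzero; lra). field. repeat split; lra.
Qed.

Lemma blocks_lb k T N : (1 <= k)%nat -> INR N * gs k T - INR T <= INR (length (blocks k T N)).
Proof.
  intros Hk. induction T.
  - simpl. rewrite Rmult_0_r. lra.
  - rewrite blocks_length, plus_INR, S_INR.
    replace (gs k (S T)) with (gs k T + /(2^k)^(S T)) by reflexivity.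
    pose proof (INR_div_lb N (2^(T*k+k)) (pow_pos' 2 _ ltac:(lia))).
    rewrite pow_INR in H. replace (INR 2) with 2 in H by (simpl; lra).
    assert (E: 2^(T*k+k) = (2^k)^(S T)) by (rewrite <- pow_mult; f_equal; lia).
    rewrite E in H.
    unfold Rdiv in H. rewrite Rmult_plus_distr_l. lra.
Qed.

Lemma INR_pow_c a n : INR (a ^ n) = INR a ^ n.
Proof. apply pow_INR. Qed.

Lemma G_lb k T N : (1 <= k)%nat ->
  INR N * (gs k T + 4/10 * (1/5^(k-1) - 1/6^(k-1)) + 8/30 * (1/7^(k-1) - 1/10^(k-1))) - (INR T + 24)
  <= INR (length (G k T N)).
Proof.
  intros Hk. unfold G. rewrite !length_app, !plus_INR.
  pose proof (blocks_lb k T N Hk).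
  pose proof (famL_lb 10 [1;3;7;9]%nat 3 5 (6^(k-1))%nat (5^(k-1))%nat N ltac:(lia) (pow_pos' 6 (k-1) ltac:(lia)) (pow_pos' 5 (k-1) ltac:(lia))).
  pose proof (famL_lb 30 [1;7;11;13;17;19;23;29]%nat 5 7 (10^(k-1))%nat (7^(k-1))%nat N ltac:(lia) (pow_pos' 10 (k-1) ltac:(lia)) (pow_pos' 7 (k-1) ltac:(lia))).
  unfold fam1, fam2. rewrite !INR_pow_c in *. simpl length in *.
  replace (INR 10) with 10 in * by (simpl; lra).
  replace (INR 30) with 30 in * by (simpl; lra).
  replace (INR 5) with 5 in * by (simpl; lra).
  replace (INR 6) with 6 in * by (simpl; lra).
  replace (INR 7) with 7 in * by (simpl; lra).
  replace (INR 4) with 4 in * by (simpl; lra).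
  replace (INR 8) with 8 in * by (simpl; lra).
  assert (5^(k-1) <> 0) by (apply pow_nonzero; lra).
  assert (6^(k-1) <> 0) by (apply pow_nonzero; lra).
  assert (7^(k-1) <> 0) by (apply pow_nonzero; lra).
  assert (10^(k-1) <> 0) by (apply pow_nonzero; lra).
  match goal with |- ?L <= _ => assert (L = INR N * gs k T - INR T +
     4 * (INR N / (10 * 5 ^ (k - 1)) - INR N / (10 * 6 ^ (k - 1)) - 2) +
     8 * (INR N / (30 * 7 ^ (k - 1)) - INR N / (30 * 10 ^ (k - 1)) - 2)) by (field; lra) end.
  lra.
Qed.

Lemma lim_aux a C : is_lim_seq (fun n => a + C * / INR n) a.
Proof.
  pose proof (is_lim_seq_scal_l _ C _ (is_lim_seq_inv _ _ is_lim_seq_INR ltac:(discriminate))) as H.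
  simpl in H. pose proof (is_lim_seq_plus' _ _ _ _ (is_lim_seq_const a) H) as H2.
  rewrite Rmult_0_r, Rplus_0_r in H2. exact H2.
Qed.

Lemma bound_T k A T : (3 <= k)%nat -> ~ contains_geom_prog A k ->
  Rbar_le (upper_density A)
    (Finite (1 - (gs k T + 4/10 * (1/5^(k-1) - 1/6^(k-1)) + 8/30 * (1/7^(k-1) - 1/10^(k-1))))).
Proof.
  intros Hk HN. set (c := gs k T + 4/10 * (1/5^(k-1) - 1/6^(k-1)) + 8/30 * (1/7^(k-1) - 1/10^(k-1))).
  unfold upper_density.
  rewrite <- (is_LimSup_seq_unique _ _ (is_lim_LimSup_seq _ _ (lim_aux (1 - c) (INR T + 24)))).
  apply LimSup_le. exists 1%nat. intros n Hn.
  pose proof (main_count k T n A Hk HN). apply le_INR in H. rewrite plus_INR in H.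
  pose proof (G_lb k T n ltac:(lia)). fold c in H0.
  assert (Hn': INR n > 0) by (apply lt_0_INR; lia).
  apply Rmult_le_reg_r with (INR n); auto.
  unfold Rdiv. rewrite Rmult_assoc, Rinv_l by lra.
  rewrite Rmult_plus_distr_r, Rmult_assoc, Rinv_l by lra. lra.
Qed.

Theorem corollary1 (k : nat) (A : nat -> bool) :
  (3 <= k)%nat ->
  (forall m : nat, A m = true -> (1 <= m)%nat) ->
  ~ contains_geom_prog A k ->
  Rbar_le (upper_density A)
    (Finite (1 - 1 / (2 ^ k - 1)
               - 2 / 5 * (1 / 5 ^ (k - 1) - 1 / 6 ^ (k - 1))
               - 4 / 15 * (1 / 7 ^ (k - 1) - 1 / 10 ^ (k - 1)))).
Proof.
  intros Hk _ HN.
  set (tgt := 1 - 1 / (2 ^ k - 1) - 2 / 5 * (1 / 5 ^ (k - 1) - 1 / 6 ^ (k - 1))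
               - 4 / 15 * (1 / 7 ^ (k - 1) - 1 / 10 ^ (k - 1))).
  assert (H2: 1 < 2^k) by (apply Rlt_pow_R1; lia || lra).
  assert (HT: forall T, Rbar_le (upper_density A) (Finite (tgt + (/2^k)^T / (2^k - 1)))).
  { intros T. pose proof (bound_T k A T Hk HN). rewrite gs_closed in H by lia.
    replace (tgt + (/2^k)^T / (2^k - 1)) with
      (1 - ((1 - (/ 2 ^ k) ^ T) / (2 ^ k - 1) + 4 / 10 * (1 / 5 ^ (k - 1) - 1 / 6 ^ (k - 1)) +
       8 / 30 * (1 / 7 ^ (k - 1) - 1 / 10 ^ (k - 1)))); auto.
    unfold tgt. field. repeat split; try lra; apply pow_nonzero; lra. }
  destruct (upper_density A) as [l| |] eqn:E.
  - simpl. destruct (Rle_dec l tgt) as [|Hgt]; auto. exfalso.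
    assert (Hx: Rabs (/2^k) < 1).
    { rewrite Rabs_right. rewrite <- Rinv_1. apply Rinv_lt_contravar; lra. left; apply Rinv_0_lt_compat; lra. }
    destruct (pow_lt_1_zero _ Hx ((l - tgt) * (2^k - 1)) ltac:(apply Rmult_lt_0_compat; lra)) as [T HTT].
    specialize (HTT T (le_n T)). specialize (HT T). simpl in HT.
    rewrite Rabs_right in HTT. 2: { left; apply pow_lt, Rinv_0_lt_compat; lra. }
    assert ((/ 2 ^ k) ^ T / (2 ^ k - 1) < l - tgt).
    { apply Rmult_lt_reg_r with (2^k - 1). lra. unfold Rdiv. rewrite Rmult_assoc, Rinv_l by lra. lra. }
    lra.
  - specialize (HT 0%nat). simpl in HT. exact HT.
  - simpl. exact I.
Qed.
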